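(* Let $K=2$ and suppose that for every horizon $T$ (a multiple of $100$) a valid pair $(\eta,\gamma)=(\eta_T,\gamma_T)$ in the non-trivial regime is chosen. Then there exist a constant $c>0$ and $T_0$ such that for all $T\ge T_0$, WSU-UX run with $(\eta_T,\gamma_T)$ on the two-phase loss sequence satisfies $\mathbb{E}[\mathcal R_T]\ge c\,T^{2/3}$.
   Context: WSU-UX. Fix integers $K\ge 2$ and $T\ge 1$ and hyperparameters $\eta,\gamma$. The pair $(\eta,\gamma)$ is called valid if $\eta,\gamma\in(0,1/2)$ and $\eta K/\gamma\le 1/2$. Given a fixed loss sequence $\ell_t\in[0,1]^K$, WSU-UX sets $\pi_{1,i}=1/K$ and in each round $t$: forms $\tilde\pi_{t,i}=(1-\gamma)\pi_{t,i}+\gamma/K$; draws $I_t$ with $\Pr(I_t=i\mid\mathcal F_{t-1})=\tilde\pi_{t,i}$; sets $\hat\ell_{t,i}=\ell_{t,i}\mathbf 1[I_t=i]/\tilde\pi_{t,i}$; and updates $\pi_{t+1,i}=\pi_{t,i}\bigl(1-\eta(\hat\ell_{t,i}-\sum_{j}\pi_{t,j}\hat\ell_{t,j})\bigr)$; $\mathcal F_t$ is the history generated by $I_1,\dots,I_t$. The regret is $\mathbb{E}[\mathcal R_T]=\mathbb{E}[\sum_{t}\sum_{j}\tilde\pi_{t,j}\ell_{t,j}]-\min_i\sum_t\ell_{t,i}$. Non-trivial regime: $\eta\ge T^{-2/3}$ and $\gamma\le T^{-1/3}$. Two-phase loss sequence ($K=2$, $T$ a multiple of $100$, $T_1=T/100$):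 $\ell_{t,1}=1,\ell_{t,2}=0$ for $1\le t\le T_1$ and $\ell_{t,1}=0,\ell_{t,2}=1$ for $T_1<t\le T$. *)

(* Defs.v *)
From Stdlib Require Import Reals Lra Lia.
Open Scope R_scope.

(* Arms are indexed 0..K-1 (arm i of the paper is index i-1); rounds are 1..T.
   A loss sequence is a function  l : nat -> nat -> R,  l t i = loss of arm i at round t. *)

Fixpoint sumK (K : nat) (f : nat -> R) : R :=
  match K with
  | O => 0
  | S k => sumK k f + f k
  end.

Fixpoint minK (K : nat) (f : nat -> R) : R :=
  match K with
  | O => 0
  | S O => f O
  | S k => Rmin (minK k f) (f k)
  end.

Definition valid (K : nat) (eta gamma : R) : Prop :=
  0 < eta < 1/2 /\ 0 < gamma < 1/2 /\ eta * INR K / gamma <= 1/2.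

Definition mix (K : nat) (gamma : R) (pi : nat -> R) (i : nat) : R :=
  (1 - gamma) * pi i + gamma / INR K.

Definition lhat (K : nat) (gamma : R) (l : nat -> nat -> R) (t : nat)
    (pi : nat -> R) (a i : nat) : R :=
  if Nat.eqb i a then l t i / mix K gamma pi i else 0.

Definition wsu_update (K : nat) (eta gamma : R) (l : nat -> nat -> R) (t : nat)
    (pi : nat -> R) (a : nat) : nat -> R :=
  fun i => pi i * (1 - eta * (lhat K gamma l t pi a i
                     - sumK K (fun j => pi j * lhat K gamma l t pi a j))).

(* Expected total loss  E[ sum_{s=t}^{t+n-1} sum_j tilde pi_{s,j} l_{s,j} ]
   of WSU-UX run for n rounds starting at round t with current weights pi;
   the expectation is over the draws I_s ~ tilde pi_s, computed exactly by
   conditioning on each draw. *)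
Fixpoint exp_loss (K : nat) (eta gamma : R) (l : nat -> nat -> R)
    (n t : nat) (pi : nat -> R) : R :=
  match n with
  | O => 0
  | S n' =>
      sumK K (fun j => mix K gamma pi j * l t j)
      + sumK K (fun a => mix K gamma pi a *
                  exp_loss K eta gamma l n' (S t) (wsu_update K eta gamma l t pi a))
  end.

Definition exp_regret (K : nat) (eta gamma : R) (l : nat -> nat -> R) (T : nat) : R :=
  exp_loss K eta gamma l T 1 (fun _ => 1 / INR K)
  - minK K (fun i => sumK T (fun s => l (S s) i)).

Definition two_phase (T : nat) (t i : nat) : R :=
  if Nat.leb t (T / 100) then (if Nat.eqb i 0 then 1 else 0)
  else (if Nat.eqb i 0 then 0 else 1).

(* Main.v *)
Require Import Defs.
From Stdlib Require Import Reals Lra Lia.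
Open Scope R_scope.


Definition Inv (p : nat -> R) := 0 < p 0%nat /\ 0 < p 1%nat /\ p 0%nat + p 1%nat = 1.

Lemma ratio_bound (e g l m : R) : 0 < e -> 0 < g -> 4 * e <= g -> 0 <= l <= 1 -> g/2 <= m ->
  0 <= e * (l / m) <= 1/2.
Proof.
  intros He Hg Heg Hl Hm.
  assert (Hm0 : 0 < m) by lra.
  assert (0 <= l / m) by (apply Rle_mult_inv_pos; lra).
  assert (l / m <= 2 / g).
  { apply Rle_trans with (1 / m). unfold Rdiv. apply Rmult_le_compat_r. left; apply Rinv_0_lt_compat; lra. lra.
    unfold Rdiv. rewrite Rmult_1_l. replace (2 * / g) with (/ (g/2)) by (field; lra).
    apply Rinv_le_contravar; lra. }
  split. apply Rmult_le_pos; lra.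
  apply Rle_trans with (e * (2/g)). apply Rmult_le_compat_l; lra.
  replace (e * (2/g)) with ((4*e)/(2*g)) by (field; lra).
  apply Rmult_le_reg_r with (2*g). lra. unfold Rdiv. rewrite Rmult_assoc, Rinv_l by lra. lra.
Qed.

Lemma inv_pres (e g : R) (l : nat -> nat -> R) (t : nat) (p : nat -> R) (a : nat) :
  0 < e -> 0 < g < 1/2 -> 4 * e <= g -> 0 <= l t 0%nat <= 1 -> 0 <= l t 1%nat <= 1 ->
  (a = 0 \/ a = 1)%nat -> Inv p -> Inv (wsu_update 2 e g l t p a).
Proof.
  intros He Hg Heg Hl0 Hl1 Ha [H0 [H1 Hs]].
  unfold Inv, wsu_update, lhat, mix; simpl.
  destruct Ha as [-> | ->]; simpl.
  - set (m := (1 - g) * p 0%nat + g / (1 + 1)).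
    assert (Hm : g/2 <= m) by (unfold m; nra).
    pose proof (ratio_bound e g (l t 0%nat) m He (proj1 Hg) Heg Hl0 Hm) as [Ha Hb].
    set (r := e * (l t 0%nat / m)) in *.
    replace (e * (l t 0%nat / m - (0 + p 0%nat * (l t 0%nat / m) + p 1%nat * 0))) with (r * p 1%nat)
      by (unfold r; replace (p 1%nat) with (1 - p 0%nat) by lra; ring).
    replace (e * (0 - (0 + p 0%nat * (l t 0%nat / m) + p 1%nat * 0))) with (- (r * p 0%nat))
      by (unfold r; ring).
    split; [apply Rmult_lt_0_compat; nra | split; [apply Rmult_lt_0_compat; nra | ]].
    replace (p 0%nat) with (1 - p 1%nat) by lra; ring.
  - set (m := (1 - g) * p 1%nat + g / (1 + 1)).
    assert (Hm : g/2 <= m) by (unfold m; nra).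
    pose proof (ratio_bound e g (l t 1%nat) m He (proj1 Hg) Heg Hl1 Hm) as [Ha Hb].
    set (r := e * (l t 1%nat / m)) in *.
    replace (e * (l t 1%nat / m - (0 + p 0%nat * 0 + p 1%nat * (l t 1%nat / m)))) with (r * p 0%nat)
      by (unfold r; replace (p 0%nat) with (1 - p 1%nat) by lra; ring).
    replace (e * (0 - (0 + p 0%nat * 0 + p 1%nat * (l t 1%nat / m)))) with (- (r * p 1%nat))
      by (unfold r; ring).
    split; [apply Rmult_lt_0_compat; nra | split; [apply Rmult_lt_0_compat; nra | ]].
    replace (p 0%nat) with (1 - p 1%nat) by lra; ring.
Qed.

Lemma tele (e g : R) (l : nat -> nat -> R) (W : nat -> R -> R) (n : nat) :
  forall (t : nat) (pi : nat -> R),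
  0 <= g <= 1 ->
  (forall s p, Inv p -> (t <= s < t + n)%nat ->
      Inv (wsu_update 2 e g l s p 0%nat) /\ Inv (wsu_update 2 e g l s p 1%nat)) ->
  (forall s p, Inv p -> (t <= s < t + n)%nat ->
      W s (p 0%nat) <= sumK 2 (fun j => mix 2 g p j * l s j)
        + sumK 2 (fun a => mix 2 g p a * W (S s) (wsu_update 2 e g l s p a 0%nat))) ->
  (forall p, Inv p -> W (t + n)%nat (p 0%nat) <= 0) ->
  Inv pi -> W t (pi 0%nat) <= exp_loss 2 e g l n t pi.
Proof.
  induction n as [|n IH]; intros t pi Hg Hinv Hstep Hend Hpi.
  - simpl. rewrite Nat.add_0_r in Hend. apply Hend; auto.
  - simpl exp_loss.
    assert (Hm : forall a, (a = 0 \/ a = 1)%nat -> 0 <= mix 2 g pi a).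
    { intros a [-> | ->]; unfold mix; simpl; destruct Hpi as [? [? ?]]; nra. }
    destruct (Hinv t pi Hpi ltac:(lia)) as [I0 I1].
    assert (IHa : forall a, (a = 0 \/ a = 1)%nat ->
       W (S t) (wsu_update 2 e g l t pi a 0%nat) <= exp_loss 2 e g l n (S t) (wsu_update 2 e g l t pi a)).
    { intros a Ha. apply IH; auto.
      - intros s p Hp Hs. apply Hinv; auto; lia.
      - intros s p Hp Hs. apply Hstep; auto; lia.
      - intros p Hp. replace (S t + n)%nat with (t + S n)%nat by lia. auto.
      - destruct Ha as [-> | ->]; auto. }
    eapply Rle_trans. apply (Hstep t pi Hpi); lia.
    apply Rplus_le_compat_l. simpl.
    pose proof (IHa 0%nat (or_introl eq_refl)). pose proof (IHa 1%nat (or_intror eq_refl)).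
    pose proof (Hm 0%nat (or_introl eq_refl)). pose proof (Hm 1%nat (or_intror eq_refl)).
    apply Rplus_le_compat. apply Rplus_le_compat_l. apply Rmult_le_compat_l; auto.
    apply Rmult_le_compat_l; auto.
Qed.


Lemma lnle (x : R) : 0 < x -> ln x <= x - 1.
Proof.
  intros Hx. destruct (Rle_or_lt (ln x) (x - 1)) as [H|H]; auto.
  exfalso. pose proof (exp_ineq1_le (x - 1)).
  pose proof (exp_increasing _ _ H). rewrite exp_ln in H1 by auto. lra.
Qed.

Lemma lnge (x : R) : 0 < x -> 1 - / x <= ln x.
Proof.
  intros Hx. pose proof (lnle (/ x) (Rinv_0_lt_compat _ Hx)).
  rewrite ln_Rinv in H by auto. lra.
Qed.

Lemma ln_mono (x y : R) : 0 < x -> x <= y -> ln x <= ln y.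
Proof.
  intros Hx [H|H]. left; apply ln_increasing; auto. subst; lra.
Qed.

Lemma ln1p_le (x : R) : 0 <= x -> ln (1 + x) <= x.
Proof. intros. pose proof (lnle (1 + x)). lra. Qed.

Lemma mlog_lb (w : R) : 0 <= w <= 1/2 -> w + w * w / 4 <= - ln (1 - w).
Proof.
  intros Hw.
  set (s := sqrt (1 - w)).
  assert (Hs0 : 0 < s) by (apply sqrt_lt_R0; lra).
  assert (Hss : s * s = 1 - w) by (apply sqrt_sqrt; lra).
  assert (Hs1 : s <= 1) by nra.
  rewrite <- Hss, ln_mult by auto.
  pose proof (lnle s Hs0).
  assert (2 * (1 - s) >= w + w * w / 4).
  { replace w with (1 - s * s) by lra.
    assert (E : 2*(1-s) - ((1-s*s) + (1-s*s)*(1-s*s)/4) = (1-s)*(1-s)*(1-s)*(3+s)/4) by field.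
    assert (0 <= (1-s)*(1-s)*(1-s)*(3+s)/4).
    { apply Rmult_le_pos; [|lra]. apply Rmult_le_pos; [|lra]. apply Rmult_le_pos; [|lra]. apply Rmult_le_pos; lra. }
    lra. }
  lra.
Qed.

Definition flog (e z : R) : R := z + e * z * (1 - z).

Fixpoint fit (e : R) (s : nat) (z : R) : R :=
  match s with O => z | S s' => fit e s' (flog e z) end.

Fixpoint Phi (e : R) (N : nat) (z : R) : R :=
  match N with O => 0 | S N' => (1 - z) + Phi e N' (flog e z) end.

Lemma flog_range (e z : R) : 0 < e < 1 -> 0 < z < 1 -> 0 < flog e z < 1.
Proof. intros. unfold flog.
  assert (0 < (1-z)*(1-e*z)) by (apply Rmult_lt_0_compat; nra).
  assert (0 <= e * z * (1 - z)) by (apply Rmult_le_pos; [apply Rmult_le_pos|]; lra).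
  split; nra. Qed.

Lemma flog_mono (e a b : R) : 0 < e < 1 -> 0 <= a <= 1 -> 0 <= b <= 1 -> a <= b -> flog e a <= flog e b.
Proof. intros. unfold flog.
  assert (E : b + e * b * (1 - b) - (a + e * a * (1 - a)) = (b - a) * (1 + e - e * (a + b))) by ring.
  assert (0 <= (b - a) * (1 + e - e * (a + b))) by (apply Rmult_le_pos; nra).
  lra. Qed.

Lemma flog_concave (e a b lam : R) : 0 < e -> 0 <= lam <= 1 ->
  lam * flog e a + (1 - lam) * flog e b <= flog e (lam * a + (1 - lam) * b).
Proof.
  intros. unfold flog.
  assert (E : flog e (lam * a + (1 - lam) * b) - (lam * flog e a + (1 - lam) * flog e b)
     = e * lam * (1 - lam) * ((a - b) * (a - b))) by (unfold flog; ring).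
  unfold flog in E.
  assert (0 <= e * lam * (1 - lam) * ((a - b) * (a - b))).
  { apply Rmult_le_pos; [|apply Rle_0_sqr]. apply Rmult_le_pos; [|lra]. apply Rmult_le_pos; lra. }
  lra.
Qed.

Lemma Phi_props (e : R) (N : nat) : 0 < e < 1 ->
  (forall a b, 0 <= a <= 1 -> 0 <= b <= 1 -> a <= b -> Phi e N b <= Phi e N a) /\
  (forall a b lam, 0 <= a <= 1 -> 0 <= b <= 1 -> 0 <= lam <= 1 ->
     Phi e N (lam * a + (1 - lam) * b) <= lam * Phi e N a + (1 - lam) * Phi e N b).
Proof.
  intros He. induction N as [|N [IHm IHc]]; simpl.
  - split; intros; [lra | ring_simplify; lra].
  - assert (Hr : forall z, 0 <= z <= 1 -> 0 <= flog e z <= 1) by (intros z Hz; unfold flog;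
      assert (0 <= (1-z)*(1-e*z)) by (apply Rmult_le_pos; nra);
      assert (0 <= e * z * (1 - z)) by (apply Rmult_le_pos; [apply Rmult_le_pos|]; lra);
      split; nra).
    split.
    + intros a b Ha Hb Hab. pose proof (flog_mono e a b He Ha Hb Hab).
      pose proof (IHm (flog e a) (flog e b) (Hr a Ha) (Hr b Hb) H). lra.
    + intros a b lam Ha Hb Hl.
      assert (Hc : 0 <= lam * a + (1 - lam) * b <= 1) by nra.
      pose proof (flog_concave e a b lam (proj1 He) Hl).
      assert (HL : 0 <= lam * flog e a + (1 - lam) * flog e b <= 1).
      { pose proof (Hr a Ha); pose proof (Hr b Hb); nra. }
      pose proof (IHm _ _ HL (Hr _ Hc) H).
      pose proof (IHc (flog e a) (flog e b) lam (Hr a Ha) (Hr b Hb) Hl).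
      nra.
Qed.

Lemma fit_S (e : R) (s : nat) : forall z, fit e (S s) z = flog e (fit e s z).
Proof. induction s as [|s IH]; intros z; simpl; auto. rewrite <- IH. reflexivity. Qed.

Lemma Phi_sum (e : R) (N : nat) : forall z, Phi e N z = sumK N (fun s => 1 - fit e s z).
Proof.
  induction N as [|N IH]; intros z; simpl; auto.
  rewrite IH. clear IH.
  induction N as [|N IHN]; simpl; [ring|].
  rewrite <- IHN. simpl. ring.
Qed.

Lemma fit_range (e : R) (s : nat) : 0 < e < 1 -> forall z, 0 < z < 1 -> 0 < fit e s z < 1.
Proof.
  intros He. induction s as [|s IH]; intros z Hz; simpl; auto.
  apply IH. apply flog_range; auto.
Qed.

Lemma flog_odds (e z : R) : 0 < e < 1 -> 0 < z < 1 ->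
  flog e z / (1 - flog e z) * (1 - e) <= z / (1 - z).
Proof.
  intros He Hz. pose proof (flog_range e z He Hz).
  unfold flog in *.
  assert (E1 : 1 - (z + e * z * (1 - z)) = (1 - z) * (1 - e * z)) by ring.
  rewrite E1.
  assert (0 < 1 - e * z) by nra.
  unfold Rdiv. apply Rmult_le_reg_r with ((1 - z) * (1 - e * z)).
  apply Rmult_lt_0_compat; lra.
  replace ((z + e * z * (1 - z)) * / ((1 - z) * (1 - e * z)) * (1 - e) * ((1 - z) * (1 - e * z)))
    with ((z + e * z * (1 - z)) * (1 - e)) by (field; lra).
  replace (z * / (1 - z) * ((1 - z) * (1 - e * z))) with (z * (1 - e * z)) by (field; lra).
  nra.
Qed.

Lemma fit_odds (e : R) (s : nat) : 0 < e < 1 -> forall z, 0 < z < 1 ->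
  fit e s z / (1 - fit e s z) * (1 - e) ^ s <= z / (1 - z).
Proof.
  intros He. induction s as [|s IH]; intros z Hz; simpl.
  - lra.
  - pose proof (flog_range e z He Hz).
    pose proof (IH (flog e z) H).
    pose proof (flog_odds e z He Hz).
    assert (0 <= (1 - e) ^ s) by (apply pow_le; lra).
    replace (fit e s (flog e z) / (1 - fit e s (flog e z)) * ((1 - e) * (1 - e) ^ s))
      with ((fit e s (flog e z) / (1 - fit e s (flog e z)) * (1 - e) ^ s) * (1 - e)) by ring.
    apply Rle_trans with (flog e z / (1 - flog e z) * (1 - e)); auto.
    apply Rmult_le_compat_r; lra.
Qed.

Lemma fit_term (e : R) (s : nat) (z : R) : 0 < e < 1 -> 0 < z < 1 ->
  1 / (1 + (z / (1 - z)) / (1 - e) ^ s) <= 1 - fit e s z.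
Proof.
  intros He Hz. pose proof (fit_range e s He z Hz) as Hf.
  pose proof (fit_odds e s He z Hz) as Ho.
  set (w := fit e s z) in *. set (d := (1 - e) ^ s) in *.
  assert (Hd : 0 < d) by (apply pow_lt; lra).
  assert (Hw : w / (1 - w) <= (z / (1 - z)) / d).
  { apply Rmult_le_reg_r with d; auto. replace (z / (1 - z) / d * d) with (z / (1 - z)) by (field; lra). lra. }
  assert (E : 1 - w = 1 / (1 + w / (1 - w))) by (field; lra).
  rewrite E. apply Rmult_le_compat_l. lra.
  apply Rinv_le_contravar.
  assert (0 <= w / (1 - w)) by (apply Rle_mult_inv_pos; lra). lra. lra.
Qed.

Lemma ln_sub_le (a b : R) : 0 < a -> 0 < b -> ln a - ln b <= a / b - 1.
Proof.
  intros Ha Hb.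
  assert (E : a = b * (a / b)) by (field; lra).
  assert (Hab : 0 < a / b) by (apply Rdiv_lt_0_compat; auto).
  rewrite E at 1. rewrite ln_mult by auto. pose proof (lnle _ Hab). lra.
Qed.

Lemma K_step (e w : R) : 0 < e < 1 -> 0 < w ->
  (1 - e) / e * (ln (1 + 1 / w) - ln (1 + (1 - e) / w)) <= 1 / (1 + w).
Proof.
  intros He Hw.
  assert (Ha : 0 < 1 + 1 / w) by (assert (0 < 1/w) by (apply Rdiv_lt_0_compat; lra); lra).
  assert (Hb : 0 < 1 + (1 - e) / w) by (assert (0 < (1-e)/w) by (apply Rdiv_lt_0_compat; lra); lra).
  pose proof (ln_sub_le _ _ Ha Hb).
  assert (E : (1 + 1 / w) / (1 + (1 - e) / w) - 1 = e / (w + 1 - e)) by (field; lra).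
  rewrite E in H.
  apply Rle_trans with ((1 - e) / e * (e / (w + 1 - e))).
  apply Rmult_le_compat_l; auto. apply Rle_mult_inv_pos; lra.
  replace ((1 - e) / e * (e / (w + 1 - e))) with ((1 - e) / (w + 1 - e)) by (field; lra).
  apply Rmult_le_reg_r with ((w + 1 - e) * (1 + w)). apply Rmult_lt_0_compat; lra.
  replace ((1 - e) / (w + 1 - e) * ((w + 1 - e) * (1 + w))) with ((1 - e) * (1 + w)) by (field; lra).
  replace (1 / (1 + w) * ((w + 1 - e) * (1 + w))) with (w + 1 - e) by (field; lra).
  nra.
Qed.

Lemma K_sum (e o : R) (N : nat) : 0 < e < 1 -> 0 < o ->
  (1 - e) / e * (ln (1 + 1 / o) - ln (1 + (1 - e) ^ N / o))
  <= sumK N (fun s => 1 / (1 + o / (1 - e) ^ s)).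
Proof.
  intros He Ho. induction N as [|N IH]; simpl.
  - replace (1 + 1 / o) with (1 + 1 / o) by auto. rewrite Rminus_diag. lra.
  - assert (Hd : 0 < (1 - e) ^ N) by (apply pow_lt; lra).
    pose proof (K_step e (o / (1 - e) ^ N) He (Rdiv_lt_0_compat _ _ Ho Hd)) as Hk.
    replace (1 / (o / (1 - e) ^ N)) with ((1 - e) ^ N / o) in Hk by (field; lra).
    replace ((1 - e) / (o / (1 - e) ^ N)) with ((1 - e) * (1 - e) ^ N / o) in Hk by (field; lra).
    lra.
Qed.

Lemma Phi_lb (e z : R) (N : nat) : 0 < e < 1 -> 0 < z < 1 ->
  (1 - e) / e * (- ln z - (1 - e) ^ N / z) <= Phi e N z.
Proof.
  intros He Hz. rewrite Phi_sum.
  set (o := z / (1 - z)).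
  assert (Ho : 0 < o) by (apply Rdiv_lt_0_compat; lra).
  pose proof (K_sum e o N He Ho) as Hk.
  assert (Hs : sumK N (fun s => 1 / (1 + o / (1 - e) ^ s)) <= sumK N (fun s => 1 - fit e s z)).
  { clear Hk. induction N as [|N IH]; simpl. lra.
    pose proof (fit_term e N z He Hz). fold o in H. lra. }
  assert (E1 : 1 + 1 / o = / z) by (unfold o; field; lra).
  rewrite E1, ln_Rinv in Hk by lra.
  assert (Hd : 0 < (1 - e) ^ N) by (apply pow_lt; lra).
  assert (H2 : ln (1 + (1 - e) ^ N / o) <= (1 - e) ^ N / z).
  { eapply Rle_trans. apply ln1p_le. apply Rle_mult_inv_pos; lra.
    unfold o. replace ((1 - e) ^ N / (z / (1 - z))) with ((1 - e) ^ N / z * (1 - z)) by (field; lra).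
    assert (0 < (1 - e) ^ N / z) by (apply Rdiv_lt_0_compat; lra). nra. }
  assert (Hc : 0 <= (1 - e) / e) by (apply Rle_mult_inv_pos; lra).
  assert ((1 - e) / e * (- ln z - (1 - e) ^ N / z) <= (1 - e) / e * (- ln z - ln (1 + (1 - e) ^ N / o))).
  { apply Rmult_le_compat_l; lra. }
  lra.
Qed.


Definition W1f (A K0 C b d z : R) := A * (- ln z) + K0 + C - b * (z / (1 - z)) - d * (/ z).

Lemma phase1_step (e g z A K0 Cn bn dn cs bsv : R) :
  0 < e -> 0 < g < 1/2 -> 4 * e <= g -> 0 < z < 1 -> A = (1 - g) * (1 - e) / e ->
  0 <= bn -> 0 <= dn ->
  (cs = 1 - g/2 - e /\ bsv = 0) \/ (cs = 1 - g/2 - e + e / (54 * g) /\ bsv = e / (54 * g * g)) ->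
  W1f A K0 (Cn + cs) ((1 - e/2) * bn + bsv) ((1 + 2 * e) * dn) z <=
  ((1 - g) * z + g / 2) +
  (((1 - g) * z + g / 2) * W1f A K0 Cn bn dn (z * (1 - e * ((1 - z) / ((1 - g) * z + g / 2))))
   + ((1 - g) * (1 - z) + g / 2) * W1f A K0 Cn bn dn z).
Proof.
  intros He Hg Heg Hz HA Hbn Hdn Hc.
  set (m0 := (1 - g) * z + g / 2).
  set (m1 := (1 - g) * (1 - z) + g / 2).
  assert (Hm0 : g / 2 <= m0) by (unfold m0; nra).
  assert (Hm1 : m0 + m1 = 1) by (unfold m0, m1; lra).
  pose proof (ratio_bound e g (1 - z) m0 He (proj1 Hg) Heg ltac:(lra) Hm0) as Hw.
  set (w := e * ((1 - z) / m0)) in *.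
  set (z' := z * (1 - w)).
  assert (Hz' : 0 < z') by (unfold z'; apply Rmult_lt_0_compat; lra).
  assert (Hmw : m0 * w = e * (1 - z)) by (unfold w; field; lra).
  set (G := (1 - z) * (1 - z) / m0).
  assert (HG0 : 0 <= G) by (unfold G; apply Rle_mult_inv_pos; nra).
  assert (Hmw2 : m0 * (w * w) = e * e * G) by (unfold w, G; field; lra).
  assert (Hln : ln z' = ln z + ln (1 - w)) by (unfold z'; apply ln_mult; lra).
  pose proof (mlog_lb w Hw) as Hlog.
  set (b0 := e * z / m0).
  assert (Hb0 : 0 <= b0 <= 1).
  { unfold b0. split. apply Rle_mult_inv_pos; nra.
    apply Rmult_le_reg_r with m0. lra. replace (e * z / m0 * m0) with (e * z) by (field; lra). nra. }
  set (u := z / (1 - z)).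
  assert (Hu0 : 0 < u) by (unfold u; apply Rdiv_lt_0_compat; lra).
  assert (E1 : 1 - z' = (1 - z) * (1 + b0)) by (unfold z', w, b0; field; lra).
  assert (Hu' : z' / (1 - z') = u * ((1 - w) / (1 + b0))) by (rewrite E1; unfold u, z'; field; lra).
  assert (F2 : m0 * (z' / (1 - z')) + m1 * u <= (1 - e / 2) * u).
  { rewrite Hu'.
    assert (E2 : m0 * (u * ((1 - w) / (1 + b0))) + m1 * u = u * (1 - e / (1 + b0))).
    { unfold m1, w, b0, m0. field. split; nra. }
    rewrite E2. rewrite (Rmult_comm (1 - e / 2)). apply Rmult_le_compat_l; [lra|].
    assert (e / 2 <= e / (1 + b0)).
    { unfold Rdiv. apply Rmult_le_compat_l; [lra|]. apply Rinv_le_contravar; lra. }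
    lra. }
  assert (F3 : m0 * (/ z') + m1 * (/ z) <= (1 + 2 * e) * (/ z)).
  { assert (E3 : m0 * (/ z') + m1 * (/ z) = (/ z) * (1 + e * (1 - z) / (1 - w))).
    { assert (E3a : m0 * (/ z') + m1 * (/ z) = (/ z) * (m0 / (1 - w) + m1)) by (unfold z'; field; lra).
      assert (E3b : m0 / (1 - w) + m1 = 1 + (m0 * w) / (1 - w)) by (replace m1 with (1 - m0) by lra; field; lra).
      rewrite E3a, E3b, Hmw. reflexivity. }
    rewrite E3. rewrite (Rmult_comm (1 + 2 * e)). apply Rmult_le_compat_l.
    left; apply Rinv_0_lt_compat; lra.
    assert (e * (1 - z) / (1 - w) <= 2 * e).
    { apply Rmult_le_reg_r with (1 - w). lra.
      replace (e * (1 - z) / (1 - w) * (1 - w)) with (e * (1 - z)) by (field; lra). nra. }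
    lra. }
  assert (F4 : 8 / 27 * (1 / g - u / (g * g)) <= G).
  { destruct (Rle_or_lt g u) as [Hgu|Hgu].
    - assert (1 / g - u / (g * g) <= 0).
      { replace (1 / g - u / (g * g)) with ((g - u) / (g * g)) by (field; lra).
        apply Rmult_le_reg_r with (g * g). nra.
        replace ((g - u) / (g * g) * (g * g)) with (g - u) by (field; lra). nra. }
      lra.
    - assert (Hzg : z < g * (1 - z)).
      { unfold u in Hgu. apply Rmult_lt_compat_r with (r := 1 - z) in Hgu; [|lra].
        replace (z / (1 - z) * (1 - z)) with z in Hgu by (field; lra). lra. }
      assert (8 / 27 * (1 / g - u / (g * g)) <= 8 / (27 * g)).
      { assert (0 <= u / (g * g)) by (apply Rle_mult_inv_pos; nra).
        replace (8 / (27 * g)) with (8 / 27 * (1 / g)) by (field; lra). nra. }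
      assert (8 / (27 * g) <= G).
      { unfold G. apply Rmult_le_reg_r with (27 * g * m0). nra.
        replace (8 / (27 * g) * (27 * g * m0)) with (8 * m0) by (field; lra).
        replace ((1 - z) * (1 - z) / m0 * (27 * g * m0)) with ((1 - z) * (1 - z) * 27 * g) by (field; lra).
        assert (H23 : 1 - z >= 2 / 3) by nra.
        assert (Hm32 : m0 <= 3 * g / 2) by (unfold m0; nra).
        assert ((1 - z) * (1 - z) >= 4 / 9) by nra.
        nra. }
      lra. }
  unfold W1f. fold u.
  replace (z * (1 - e * ((1 - z) / ((1 - g) * z + g / 2)))) with z' by reflexivity.
  fold m0 m1.
  rewrite Hln.
  assert (HA0 : A * e = (1 - g) * (1 - e)) by (rewrite HA; field; lra).
  assert (Hbn' : bn * (m0 * (z' / (1 - z')) + m1 * u) <= bn * ((1 - e / 2) * u)) by (apply Rmult_le_compat_l; auto).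
  assert (Hdn' : dn * (m0 * (/ z') + m1 * (/ z)) <= dn * ((1 + 2 * e) * (/ z))) by (apply Rmult_le_compat_l; auto).
  assert (HA1 : 0 <= A) by (rewrite HA; apply Rle_mult_inv_pos; nra).
  assert (Hlg : A * (m0 * (w + w * w / 4)) <= A * (m0 * (- ln (1 - w)))).
  { apply Rmult_le_compat_l; auto. apply Rmult_le_compat_l; lra. }
  assert (Hkey : A * (m0 * (w + w * w / 4)) = (1 - g) * (1 - e) * (1 - z) + (1 - g) * (1 - e) * e * G / 4).
  { replace (A * (m0 * (w + w * w / 4))) with (A * (m0 * w) + A * (m0 * (w * w)) / 4) by field.
    rewrite Hmw, Hmw2. replace (A * (e * (1 - z))) with ((A * e) * (1 - z)) by ring.
    replace (A * (e * e * G)) with ((A * e) * e * G) by ring. rewrite HA0. field. }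
  assert (Hge : (1 - g) * (1 - e) >= 1 / 4) by nra.
  assert (Hgain : (1 - g) * (1 - e) * e * G / 4 >= e / 16 * G).
  { assert (0 <= e * G) by (apply Rmult_le_pos; lra). nra. }
  assert (Hgain2 : e / 16 * G >= (cs - (1 - g / 2 - e)) - bsv * u).
  { destruct Hc as [[-> ->] | [-> ->]].
    - assert (0 <= e / 16 * G) by (apply Rmult_le_pos; lra). lra.
    - assert (e / 16 * (8 / 27 * (1 / g - u / (g * g))) <= e / 16 * G) by (apply Rmult_le_compat_l; lra).
      replace (e / 16 * (8 / 27 * (1 / g - u / (g * g)))) with (e / (54 * g) - e / (54 * g * g) * u) in H
        by (field; lra).
      lra. }
  assert (Hm0z : m0 + (1 - g) * (1 - e) * (1 - z) >= 1 - g / 2 - e).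
  { assert (E4 : m0 + (1 - g) * (1 - e) * (1 - z) - (1 - g / 2 - e) = (1 - g) * e * z + g * e) by (unfold m0; field).
    assert (0 <= (1 - g) * e * z) by (apply Rmult_le_pos; [apply Rmult_le_pos|]; lra).
    assert (0 <= g * e) by (apply Rmult_le_pos; lra). lra. }
  replace m1 with (1 - m0) in * by lra.
  nra.
Qed.

Definition W2f (e g : R) (N : nat) (z : R) := (1 - g) * Phi e N z + g * INR N / 2.

Lemma phase2_step (e g z : R) (N : nat) :
  0 < e -> 0 < g < 1/2 -> 4 * e <= g -> 0 < z < 1 ->
  W2f e g (S N) z <=
  ((1 - g) * (1 - z) + g / 2) +
  (((1 - g) * z + g / 2) * W2f e g N z
   + ((1 - g) * (1 - z) + g / 2) * W2f e g N (z * (1 + e * ((1 - z) / ((1 - g) * (1 - z) + g / 2))))).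
Proof.
  intros He Hg Heg Hz.
  set (m0 := (1 - g) * z + g / 2).
  set (m1 := (1 - g) * (1 - z) + g / 2).
  assert (Hm1 : g / 2 <= m1) by (unfold m1; nra).
  assert (Hm0 : g / 2 <= m0) by (unfold m0; nra).
  assert (Hs : m0 + m1 = 1) by (unfold m0, m1; field).
  pose proof (ratio_bound e g (1 - z) m1 He (proj1 Hg) Heg ltac:(lra) Hm1) as Hw.
  pose proof (ratio_bound e g z m1 He (proj1 Hg) Heg ltac:(lra) Hm1) as Hw2.
  set (z2 := z * (1 + e * ((1 - z) / m1))).
  assert (Hz2 : 0 <= z2 <= 1).
  { unfold z2. split. apply Rmult_le_pos; lra.
    assert (E : 1 - z * (1 + e * ((1 - z) / m1)) = (1 - z) * (1 - e * (z / m1))) by (field; lra).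
    assert (0 <= (1 - z) * (1 - e * (z / m1))) by (apply Rmult_le_pos; lra). lra. }
  assert (Hf : flog e z = m0 * z + (1 - m0) * z2).
  { unfold flog, z2. replace (1 - m0) with m1 by lra. replace m0 with (1 - m1) by lra. field. lra. }
  assert (He1 : 0 < e < 1) by lra.
  destruct (Phi_props e N He1) as [_ Hconv].
  pose proof (Hconv z z2 m0 ltac:(lra) Hz2 ltac:(lra)) as Hc. rewrite <- Hf in Hc.
  replace (1 - m0) with m1 in Hc by lra.
  unfold W2f. simpl Phi. rewrite S_INR.
  replace m1 with (1 - m0) in * by lra.
  assert (0 <= 1 - g) by lra.
  assert ((1 - g) * Phi e N (flog e z) <= (1 - g) * (m0 * Phi e N z + (1 - m0) * Phi e N z2))
    by (apply Rmult_le_compat_l; auto).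
  assert (Hd : m0 = (1 - g) * z + g / 2) by reflexivity. clearbody m0. subst m0. lra.
Qed.


Fixpoint Cseq (c : nat -> R) (T1 j : nat) : R :=
  match j with O => 0 | S j' => Cseq c T1 j' + c (T1 - j')%nat end.
Fixpoint Bseq (rho : R) (b : nat -> R) (T1 j : nat) : R :=
  match j with O => 0 | S j' => rho * Bseq rho b T1 j' + b (T1 - j')%nat end.

Lemma Cseq_lb (c0 a : R) (k T1 : nat) : 0 <= a -> forall j, (j <= T1)%nat ->
  INR j * c0 + a * INR (Nat.min j (T1 - k))
  <= Cseq (fun s => if Nat.ltb k s then c0 + a else c0) T1 j.
Proof.
  intros Ha. induction j as [|j IH]; intros Hj; cbn [Cseq].
  - simpl. lra.
  - specialize (IH ltac:(lia)).
    destruct (Nat.ltb k (T1 - j)) eqn:E.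
    + apply Nat.ltb_lt in E.
      replace (Nat.min (S j) (T1 - k)) with (S (Nat.min j (T1 - k))) by lia.
      rewrite !S_INR. lra.
    + apply Nat.ltb_ge in E.
      replace (Nat.min (S j) (T1 - k)) with (Nat.min j (T1 - k)) by lia.
      rewrite S_INR. lra.
Qed.

Lemma Bseq_nonneg (rho b : R) (k T1 : nat) : 0 <= rho -> 0 <= b -> forall j,
  0 <= Bseq rho (fun s => if Nat.ltb k s then b else 0) T1 j.
Proof.
  intros Hr Hb. induction j as [|j IH]; simpl. lra.
  destruct (Nat.ltb k (T1 - j)); nra.
Qed.

Lemma Bseq_ub (rho b : R) (k T1 : nat) : 0 <= rho < 1 -> 0 <= b -> forall j,
  Bseq rho (fun s => if Nat.ltb k s then b else 0) T1 j <= b / (1 - rho).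
Proof.
  intros Hr Hb. assert (0 <= b / (1 - rho)) by (apply Rle_mult_inv_pos; lra).
  induction j as [|j IH]; simpl. lra.
  assert (E : b / (1 - rho) = rho * (b / (1 - rho)) + b) by (field; lra).
  destruct (Nat.ltb k (T1 - j)); nra.
Qed.

Lemma Bseq_tail (rho b : R) (k T1 : nat) : (k <= T1)%nat -> forall i, (i <= k)%nat ->
  Bseq rho (fun s => if Nat.ltb k s then b else 0) T1 (T1 - k + i)
  = rho ^ i * Bseq rho (fun s => if Nat.ltb k s then b else 0) T1 (T1 - k).
Proof.
  intros Hk. induction i as [|i IH]; intros Hi.
  - rewrite Nat.add_0_r. simpl. ring.
  - replace (T1 - k + S i)%nat with (S (T1 - k + i)) by lia. simpl.
    rewrite IH by lia.
    replace (Nat.ltb k (T1 - (T1 - k + i))) with false.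
    + ring.
    + symmetry. apply Nat.ltb_ge. lia.
Qed.

Lemma tp1 (T s : nat) : (s <= T / 100)%nat -> two_phase T s 0%nat = 1 /\ two_phase T s 1%nat = 0.
Proof. intros H. unfold two_phase. apply Nat.leb_le in H. rewrite H. simpl. auto. Qed.

Lemma tp2 (T s : nat) : (T / 100 < s)%nat -> two_phase T s 0%nat = 0 /\ two_phase T s 1%nat = 1.
Proof. intros H. unfold two_phase. replace (Nat.leb s (T/100)) with false. simpl. auto.
  symmetry. apply Nat.leb_gt. auto. Qed.

Lemma upd_ph1 (e g : R) (T s : nat) (p : nat -> R) : (s <= T / 100)%nat -> 0 < g < 1/2 -> Inv p ->
  wsu_update 2 e g (two_phase T) s p 0%nat 0%nat = p 0%nat * (1 - e * ((1 - p 0%nat) / ((1 - g) * p 0%nat + g / 2))) /\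
  wsu_update 2 e g (two_phase T) s p 1%nat 0%nat = p 0%nat /\
  sumK 2 (fun j => mix 2 g p j * two_phase T s j) = (1 - g) * p 0%nat + g / 2.
Proof.
  intros Hs Hg [H0 [H1 H01]]. destruct (tp1 T s Hs) as [E0 E1].
  unfold wsu_update, lhat, mix. simpl. rewrite E0, E1.
  replace (p 1%nat) with (1 - p 0%nat) by lra.
  assert (0 < (1 - g) * p 0%nat + g / (1 + 1)) by nra.
  assert (0 < (1 - g) * (1 - p 0%nat) + g / (1 + 1)) by nra.
  repeat split; field; lra.
Qed.

Lemma upd_ph2 (e g : R) (T s : nat) (p : nat -> R) : (T / 100 < s)%nat -> 0 < g < 1/2 -> Inv p ->
  wsu_update 2 e g (two_phase T) s p 0%nat 0%nat = p 0%nat /\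
  wsu_update 2 e g (two_phase T) s p 1%nat 0%nat = p 0%nat * (1 + e * ((1 - p 0%nat) / ((1 - g) * (1 - p 0%nat) + g / 2))) /\
  sumK 2 (fun j => mix 2 g p j * two_phase T s j) = (1 - g) * (1 - p 0%nat) + g / 2.
Proof.
  intros Hs Hg [H0 [H1 H01]]. destruct (tp2 T s Hs) as [E0 E1].
  unfold wsu_update, lhat, mix. simpl. rewrite E0, E1.
  replace (p 1%nat) with (1 - p 0%nat) by lra.
  assert (0 < (1 - g) * p 0%nat + g / (1 + 1)) by nra.
  assert (0 < (1 - g) * (1 - p 0%nat) + g / (1 + 1)) by nra.
  repeat split; field; lra.
Qed.

Lemma sum_tp (T : nat) : forall n, sumK n (fun s => two_phase T (S s) 0%nat) = INR (Nat.min n (T / 100)).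
Proof.
  induction n as [|n IH]; cbn [sumK]. simpl; lra.
  rewrite IH. unfold two_phase.
  destruct (Nat.leb (S n) (T / 100)) eqn:E; simpl Nat.eqb; cbv iota.
  - apply Nat.leb_le in E. replace (Nat.min (S n) (T/100)) with (S (Nat.min n (T/100))) by lia.
    rewrite S_INR. lra.
  - apply Nat.leb_gt in E. replace (Nat.min (S n) (T/100)) with (Nat.min n (T/100)) by lia. lra.
Qed.

Definition cfun (e g : R) (k : nat) := fun s => if Nat.ltb k s then (1 - g/2 - e) + e / (54 * g) else (1 - g/2 - e).
Definition bfun (e g : R) (k : nat) := fun s => if Nat.ltb k s then e / (54 * g * g) else 0.

Definition Wfun (e g : R) (T : nat) (s : nat) (z : R) : R :=
  let T1 := (T / 100)%nat in let k := (T1 / 2)%nat in let n2 := (T - T1)%nat in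
  let A := (1 - g) * (1 - e) / e in let K0 := g * INR n2 / 2 in
  if Nat.leb s T1 then
    W1f A K0 (Cseq (cfun e g k) T1 (T1 + 1 - s)) (Bseq (1 - e/2) (bfun e g k) T1 (T1 + 1 - s))
        ((1 + 2 * e) ^ (T1 + 1 - s) * (A * (1 - e) ^ n2)) z
  else W2f e g (T + 1 - s) z.

Lemma Wnext (e g : R) (T s : nat) (y : R) : 0 < e < 1/2 -> 0 < g < 1/2 -> (s <= T / 100)%nat -> (T / 100 <= T)%nat ->
  0 < y < 1 ->
  let T1 := (T / 100)%nat in let k := (T1 / 2)%nat in let n2 := (T - T1)%nat in
  let A := (1 - g) * (1 - e) / e in let K0 := g * INR n2 / 2 in
  W1f A K0 (Cseq (cfun e g k) T1 (T1 - s)) (Bseq (1 - e/2) (bfun e g k) T1 (T1 - s))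
        ((1 + 2 * e) ^ (T1 - s) * (A * (1 - e) ^ n2)) y <= Wfun e g T (S s) y.
Proof.
  intros He Hg Hs HT Hy. intros T1 k n2 A K0.
  unfold Wfun. fold T1 k n2 A K0.
  destruct (Nat.leb (S s) T1) eqn:E.
  - replace (T1 + 1 - S s)%nat with (T1 - s)%nat by lia. lra.
  - apply Nat.leb_gt in E. assert (s = T1) by (unfold T1 in *; lia). subst s.
    rewrite Nat.sub_diag. simpl Cseq. simpl Bseq. rewrite pow_O.
    replace (T + 1 - S T1)%nat with n2 by (unfold n2; lia).
    unfold W1f, W2f.
    pose proof (Phi_lb e y n2 ltac:(lra) Hy).
    assert (0 <= 1 - g) by lra.
    assert ((1 - g) * ((1 - e) / e * (- ln y - (1 - e) ^ n2 / y)) <= (1 - g) * Phi e n2 y)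
      by (apply Rmult_le_compat_l; auto).
    assert (EA : A = (1 - g) * ((1 - e) / e)) by (unfold A; field; lra).
    rewrite EA.
    replace ((1 - e) ^ n2 / y) with ((1 - e) ^ n2 * / y) in H1 by (unfold Rdiv; ring).
    unfold K0. nra.
Qed.

Lemma exp_loss_lb (e g : R) (T : nat) : 0 < e < 1/2 -> 0 < g < 1/2 -> 4 * e <= g -> (100 <= T)%nat ->
  Wfun e g T 1 (1/2) <= exp_loss 2 e g (two_phase T) T 1 (fun _ => 1 / INR 2).
Proof.
  intros He Hg Heg HT.
  assert (HT1 : (1 <= T / 100)%nat) by (apply Nat.div_le_lower_bound; lia).
  assert (HT1' : (T / 100 <= T)%nat) by (apply Nat.div_le_upper_bound; lia).
  replace (1/2) with (1 / INR 2) by (simpl; field).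
  change (1 / INR 2) with ((fun _ : nat => 1 / INR 2) 0%nat) at 1.
  apply (tele e g (two_phase T) (Wfun e g T) T 1 (fun _ : nat => 1 / INR 2)).
  - lra.
  - intros s p Hp Hs. split; apply inv_pres; try lra; auto;
      unfold two_phase; destruct (Nat.leb s (T/100)); destruct (Nat.eqb 0 0); simpl; lra.
  - intros s p Hp Hs.
    destruct Hp as [H0 [H1 H01]] eqn:Hpp. clear Hpp.
    assert (Hz : 0 < p 0%nat < 1) by lra.
    set (z := p 0%nat) in *.
    destruct (Nat.le_gt_cases s (T / 100)) as [Hph | Hph].
    + destruct (upd_ph1 e g T s p Hph Hg (conj H0 (conj H1 H01))) as [U0 [U1 Cst]].
      simpl sumK at 2. rewrite Cst. fold z in U0, U1. rewrite U0, U1.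
      pose proof (inv_pres e g (two_phase T) s p 0%nat ltac:(lra) Hg Heg
         ltac:(unfold two_phase; destruct (Nat.leb s (T/100)); simpl; lra)
         ltac:(unfold two_phase; destruct (Nat.leb s (T/100)); simpl; lra) (or_introl eq_refl)
         (conj H0 (conj H1 H01))) as [Hz0 [Hz1 Hzs]].
      fold z in Hz0, Hz1, Hzs. rewrite U0 in Hz0, Hzs.
      assert (Hz' : 0 < z * (1 - e * ((1 - z) / ((1 - g) * z + g / 2))) < 1) by lra.
      pose proof (Wnext e g T s _ He Hg Hph HT1' Hz') as Wn1.
      pose proof (Wnext e g T s _ He Hg Hph HT1' Hz) as Wn2.
      simpl in Wn1, Wn2.
      set (T1 := (T / 100)%nat) in *. set (k := (T1 / 2)%nat) in *. set (n2 := (T - T1)%nat) in *.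
      set (A := (1 - g) * (1 - e) / e) in *. set (K0 := g * INR n2 / 2) in *.
      set (Cn := Cseq (cfun e g k) T1 (T1 - s)) in *.
      set (bn := Bseq (1 - e/2) (bfun e g k) T1 (T1 - s)) in *.
      set (dn := (1 + 2 * e) ^ (T1 - s) * (A * (1 - e) ^ n2)) in *.
      assert (Hbn : 0 <= bn).
      { unfold bn, bfun. apply Bseq_nonneg. lra. apply Rle_mult_inv_pos; nra. }
      assert (Hdn : 0 <= dn).
      { unfold dn, A. apply Rmult_le_pos. apply pow_le; lra. apply Rmult_le_pos.
        apply Rle_mult_inv_pos; nra. apply pow_le; lra. }
      assert (HW : Wfun e g T s z = W1f A K0 (Cn + cfun e g k s) ((1 - e/2) * bn + bfun e g k s) ((1 + 2 * e) * dn) z).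
      { unfold Wfun. fold T1 k n2 A K0. replace (Nat.leb s T1) with true by (symmetry; apply Nat.leb_le; auto).
        replace (T1 + 1 - s)%nat with (S (T1 - s)) by lia. cbn [Cseq Bseq].
        replace (T1 - (T1 - s))%nat with s by lia. fold Cn bn. unfold dn. rewrite <- tech_pow_Rmult. f_equal. ring. }
      rewrite HW.
      eapply Rle_trans. apply (phase1_step e g z A K0 Cn bn dn (cfun e g k s) (bfun e g k s)); auto; try lra.
      { unfold cfun, bfun. destruct (Nat.ltb k s); [right | left]; split; auto. }
      assert (Hm0 : 0 <= (1 - g) * z + g / 2) by nra.
      assert (Hm1 : 0 <= (1 - g) * (1 - z) + g / 2) by nra.
      apply Rplus_le_compat_l. simpl.
      apply Rplus_le_compat. rewrite Rplus_0_l.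
      apply Rmult_le_compat_l; auto.
      replace (mix 2 g p 1%nat) with ((1 - g) * (1 - z) + g / 2)
        by (unfold mix; simpl; replace (p 1%nat) with (1 - z) by lra; field).
      apply Rmult_le_compat_l; auto.
    + destruct (upd_ph2 e g T s p Hph Hg (conj H0 (conj H1 H01))) as [U0 [U1 Cst]].
      simpl sumK at 2. rewrite Cst. fold z in U0, U1. rewrite U0, U1.
      assert (HW : forall y n, (T / 100 < n)%nat -> (n <= T + 1)%nat -> Wfun e g T n y = W2f e g (T + 1 - n) y).
      { intros y n Hn1 Hn2. unfold Wfun. replace (Nat.leb n (T / 100)) with false. reflexivity.
        symmetry. apply Nat.leb_gt. auto. }
      rewrite (HW z s) by lia. rewrite !(HW _ (S s)) by lia.
      replace (T + 1 - s)%nat with (S (T + 1 - S s)) by lia.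
      eapply Rle_trans. apply phase2_step; auto; lra.
      replace (mix 2 g p 1%nat) with ((1 - g) * (1 - z) + g / 2)
        by (unfold mix; simpl; replace (p 1%nat) with (1 - z) by lra; field).
      replace (mix 2 g p 0%nat) with ((1 - g) * z + g / 2) by (unfold mix; simpl; fold z; field).
      simpl. fold z. lra.
  - intros p Hp. unfold Wfun. replace (Nat.leb (1 + T) (T / 100)) with false.
    replace (T + 1 - (1 + T))%nat with 0%nat by lia. unfold W2f. simpl. lra.
    symmetry. apply Nat.leb_gt. lia.
  - unfold Inv. simpl. repeat split; lra.
Qed.

Lemma main_bound (e g : R) (T : nat) : 0 < e < 1/2 -> 0 < g < 1/2 -> 4 * e <= g -> (100 <= T)%nat ->
  e / (54 * g) * INR (T / 100 - T / 100 / 2) - (1 - e / 2) ^ (T / 100 / 2) * (1 / (27 * g * g))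
  - 2 * ((1 + 2 * e) ^ (T / 100) * ((1 - e) ^ (T - T / 100) / e))
  + (g * INR (T - T / 100) / 2 - g * INR (T / 100) / 2 - e * INR (T / 100))
  <= exp_regret 2 e g (two_phase T) T.
Proof.
  intros He Hg Heg HT.
  assert (HT1 : (1 <= T / 100)%nat) by (apply Nat.div_le_lower_bound; lia).
  assert (HT1' : (T / 100 <= T)%nat) by (apply Nat.div_le_upper_bound; lia).
  pose proof (exp_loss_lb e g T He Hg Heg HT) as HL.
  unfold exp_regret.
  assert (Hmin : minK 2 (fun i => sumK T (fun s => two_phase T (S s) i)) <= INR (T / 100)).
  { simpl minK. eapply Rle_trans. apply Rmin_l. rewrite sum_tp.
    replace (Nat.min T (T / 100)) with (T / 100)%nat by lia. lra. }
  unfold Wfun in HL.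
  set (T1 := (T / 100)%nat) in *. set (k := (T1 / 2)%nat) in *. set (n2 := (T - T1)%nat) in *.
  replace (Nat.leb 1 T1) with true in HL by (symmetry; apply Nat.leb_le; auto).
  replace (T1 + 1 - 1)%nat with T1 in HL by lia.
  unfold W1f in HL.
  assert (Hk : (k <= T1)%nat) by (unfold k; apply Nat.div_le_upper_bound; lia).
  pose proof (Cseq_lb (1 - g/2 - e) (e / (54 * g)) k T1 ltac:(apply Rle_mult_inv_pos; lra) T1 (le_n _)) as HC.
  fold (cfun e g k) in HC.
  replace (Nat.min T1 (T1 - k)) with (T1 - k)%nat in HC by lia.
  assert (HB : Bseq (1 - e / 2) (bfun e g k) T1 T1 <= (1 - e / 2) ^ k * (1 / (27 * g * g))).
  { unfold bfun. pose proof (Bseq_tail (1 - e/2) (e / (54 * g * g)) k T1 Hk k (le_n _)) as Ht.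
    replace (T1 - k + k)%nat with T1 in Ht by lia. rewrite Ht.
    apply Rmult_le_compat_l. apply pow_le; lra.
    eapply Rle_trans. apply Bseq_ub. lra. apply Rle_mult_inv_pos; nra.
    right. field. lra. }
  set (D := (1 + 2 * e) ^ T1 * ((1 - g) * (1 - e) / e * (1 - e) ^ n2)) in *.
  assert (HD : D <= (1 + 2 * e) ^ T1 * ((1 - e) ^ n2 / e)).
  { unfold D. apply Rmult_le_compat_l. apply pow_le; lra.
    assert (0 <= (1 - e) ^ n2) by (apply pow_le; lra).
    replace ((1 - g) * (1 - e) / e * (1 - e) ^ n2) with (((1 - g) * (1 - e)) * ((1 - e) ^ n2 / e)) by (field; lra).
    assert (0 <= (1 - e) ^ n2 / e) by (apply Rle_mult_inv_pos; lra).
    assert ((1 - g) * (1 - e) <= 1) by nra. nra. }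
  assert (Hln2 : - ln (1 / 2) > 0).
  { replace (1/2) with (/ 2) by field. rewrite ln_Rinv by lra. pose proof ln_lt_2. lra. }
  assert (HA : 0 <= (1 - g) * (1 - e) / e) by (apply Rle_mult_inv_pos; nra).
  assert (Hu : 1 / 2 / (1 - 1 / 2) = 1) by field.
  assert (Hv : / (1 / 2) = 2) by field.
  rewrite Hu, Hv in HL.
  assert (0 <= (1 - g) * (1 - e) / e * - ln (1 / 2)) by (apply Rmult_le_pos; lra).
  assert (HC' : INR T1 * (1 - g / 2 - e) + e / (54 * g) * INR (T1 - k) <= Cseq (cfun e g k) T1 T1) by exact HC.
  lra.
Qed.


Lemma exp_pow_id (x : R) (m : nat) : exp x ^ m = exp (INR m * x).
Proof.
  induction m as [|m IH]. simpl. rewrite Rmult_0_l, exp_0. auto.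
  rewrite <- tech_pow_Rmult, IH, <- exp_plus, S_INR. f_equal. ring.
Qed.

Lemma exp_ge5 (y : R) : 0 <= y -> (y / 5) ^ 5 <= exp y.
Proof.
  intros Hy. replace (exp y) with (exp (y / 5) ^ 5).
  - apply pow_incr. split. lra. pose proof (exp_ineq1_le (y / 5)). lra.
  - rewrite exp_pow_id. f_equal. simpl. field.
Qed.

Lemma decay (a : R) (m : nat) : 0 < a < 1 -> (0 < m)%nat -> (1 - a) ^ m <= / ((a * INR m / 5) ^ 5).
Proof.
  intros Ha Hm.
  assert (Hm' : 0 < INR m) by (apply lt_0_INR; auto).
  assert (H1 : (1 - a) ^ m <= exp (- a) ^ m).
  { apply pow_incr. split. lra. pose proof (exp_ineq1_le (- a)). lra. }
  rewrite exp_pow_id in H1.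
  replace (INR m * - a) with (- (a * INR m)) in H1 by ring.
  rewrite exp_Ropp in H1.
  assert (Hp : 0 < (a * INR m / 5) ^ 5) by (apply pow_lt; apply Rdiv_lt_0_compat; [apply Rmult_lt_0_compat|]; lra).
  pose proof (exp_ge5 (a * INR m) ltac:(apply Rmult_le_pos; lra)).
  eapply Rle_trans. apply H1. apply Rinv_le_contravar; auto.
Qed.

Lemma tau_facts (T : nat) : (0 < T)%nat ->
  let tau := Rpower (INR T) (1/3) in
  0 < tau /\ tau ^ 3 = INR T /\ Rpower (INR T) (2/3) = tau ^ 2 /\
  Rpower (INR T) (- (2/3)) = / tau ^ 2 /\ Rpower (INR T) (- (1/3)) = / tau.
Proof.
  intros HT tau.
  assert (HT' : 0 < INR T) by (apply lt_0_INR; auto).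
  assert (Ht : 0 < tau) by (unfold tau, Rpower; apply exp_pos).
  assert (P : forall n : nat, Rpower (INR T) (1/3 * INR n) = tau ^ n).
  { intros n. rewrite <- Rpower_mult. fold tau. apply Rpower_pow. auto. }
  split; auto. split.
  - rewrite <- P. replace (1/3 * INR 3) with 1 by (simpl; field). apply Rpower_1; auto.
  - split.
    + rewrite <- P. f_equal. simpl. field.
    + split.
      * rewrite Rpower_Ropp. rewrite <- P. f_equal. f_equal. simpl. field.
      * rewrite Rpower_Ropp. fold tau. auto.
Qed.

Theorem theorem2 :
  forall eta gamma : nat -> R,
    (forall T : nat, (0 < T)%nat -> (T mod 100 = 0)%nat ->
       valid 2 (eta T) (gamma T) /\
       Rpower (INR T) (- (2 / 3)) <= eta T /\
       gamma T <= Rpower (INR T) (- (1 / 3))) ->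
    exists c : R, 0 < c /\
    exists T0 : nat, forall T : nat,
      (T0 <= T)%nat -> (0 < T)%nat -> (T mod 100 = 0)%nat ->
      c * Rpower (INR T) (2 / 3) <= exp_regret 2 (eta T) (gamma T) (two_phase T) T.
Proof.
  intros eta gamma H.
  exists (1 / 21600). split. lra.
  exists (Nat.pow 10 21). intros T HT0 HTp HTm.
  destruct (H T HTp HTm) as [[[He1 He2] [[Hg1 Hg2] Heg0]] [Hlo Hhi]].
  set (e := eta T) in *. set (g := gamma T) in *.
  assert (Heg : 4 * e <= g).
  { simpl INR in Heg0. apply Rmult_le_reg_r with (/ g). apply Rinv_0_lt_compat; lra.
    replace (g * / g) with 1 by (field; lra).
    replace (e * (1 + 1) / g) with (e * 2 * / g) in Heg0 by (field; lra). replace (4 * e * / g) with (2 * (e * 2 * / g)) by ring. lra. }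
  pose proof (Nat.div_mod T 100 ltac:(lia)) as Hdm. rewrite HTm in Hdm.
  assert (H100 : (100 <= T)%nat) by (clear HT0; lia).
  pose proof (main_bound e g T (conj He1 He2) (conj Hg1 Hg2) Heg H100) as HM.
  destruct (tau_facts T HTp) as [Ht [Ht3 [Ht2 [Htm2 Htm1]]]].
  set (tau := Rpower (INR T) (1/3)) in *.
  rewrite Ht2. rewrite Htm2 in Hlo. rewrite Htm1 in Hhi.
  assert (HTbig : 10 ^ 21 <= INR T).
  { apply le_INR in HT0. rewrite pow_INR in HT0. replace (INR 10) with 10 in HT0 by (simpl; lra). auto. }
  assert (Htau : 10 ^ 7 <= tau).
  { destruct (Rle_or_lt (10 ^ 7) tau) as [h|h]; auto.
    exfalso. set (M := 10 ^ 7) in *. assert (EM : 10 ^ 21 = M * M * M) by (unfold M; ring).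
    assert (0 < M) by (unfold M; apply pow_lt; lra).
    assert (tau * tau < M * M) by nra. assert (tau * tau * tau < M * M * M) by nra.
    replace (tau ^ 3) with (tau * tau * tau) in Ht3 by ring. lra. }
  set (T1 := (T / 100)%nat) in *. set (k := (T1 / 2)%nat) in *.
  assert (HTT1 : T = (100 * T1)%nat) by (unfold T1; clear HT0; lia).
  pose proof (Nat.div_mod T1 2 ltac:(lia)) as Hdm2. pose proof (Nat.mod_upper_bound T1 2 ltac:(lia)) as Hmb.
  fold k in Hdm2.
  assert (Hn2 : (T - T1 = 99 * T1)%nat) by (clear HT0; lia).
  rewrite Hn2 in HM.
  assert (HT1r : INR T1 = tau ^ 3 / 100).
  { assert (E100 : INR T = 100 * INR T1).
    { rewrite HTT1 at 1. rewrite mult_INR. replace (INR 100) with 100 by (simpl; lra). ring. }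
    lra. }
  assert (Hkr1 : INR T1 <= 2 * INR k + 1).
  { replace 2 with (INR 2) by (simpl; lra). rewrite <- mult_INR, <- S_INR. apply le_INR. clear HT0; lia. }
  assert (Hkr2 : INR T1 <= 2 * INR (T1 - k)).
  { replace 2 with (INR 2) by (simpl; lra). rewrite <- mult_INR. apply le_INR. clear HT0; lia. }
  assert (Htau3 : 10 ^ 21 <= tau ^ 3) by lra.
  assert (Hlo' : / tau <= e * tau).
  { replace (/ tau) with (/ tau ^ 2 * tau) by (field; lra). apply Rmult_le_compat_r; lra. }
  assert (Hetg : g <= e * tau) by lra.
  assert (Hginv : 0 < g) by lra.
  assert (Htpos : 0 < tau ^ 3) by (apply pow_lt; lra).
  assert (HgainB : tau ^ 2 / 10800 <= e / (54 * g) * INR (T1 - k)).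
  { assert (Hc0 : 0 <= e / (54 * g)) by (apply Rle_mult_inv_pos; lra).
    assert (e / (54 * g) * (tau ^ 3 / 200) <= e / (54 * g) * INR (T1 - k)).
    { apply Rmult_le_compat_l; auto. lra. }
    assert (E : e / (54 * g) * (tau ^ 3 / 200) - tau ^ 2 / 10800 = tau ^ 2 * (e * tau - g) / (10800 * g))
      by (field; lra).
    assert (0 <= tau ^ 2 * (e * tau - g) / (10800 * g)).
    { apply Rle_mult_inv_pos; [|lra]. apply Rmult_le_pos; [apply pow_le; lra | lra]. }
    lra. }
  assert (HbetaB : (1 - e / 2) ^ k * (1 / (27 * g * g)) <= tau ^ 2 / 43200).
  { assert (Hk0 : (0 < k)%nat).
    { destruct k eqn:Ek; [|lia]. exfalso. simpl INR in Hkr1. lra. }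
    pose proof (decay (e / 2) k ltac:(lra) Hk0) as Hd.
    assert (HkR : tau ^ 3 / 400 <= INR k) by lra.
    assert (HX : tau / 4000 <= e / 2 * INR k / 5).
    { assert (Hek : / tau ^ 2 * (tau ^ 3 / 400) <= e * INR k).
      { apply Rmult_le_compat; try lra. left; apply Rinv_0_lt_compat, pow_lt; lra. }
      replace (/ tau ^ 2 * (tau ^ 3 / 400)) with (tau / 400) in Hek by (field; lra). lra. }
    assert (HX5 : / ((e / 2 * INR k / 5) ^ 5) <= / ((tau / 4000) ^ 5)).
    { apply Rinv_le_contravar. apply pow_lt; lra. apply pow_incr; lra. }
    assert (Hgg : 1 / (27 * g * g) <= tau ^ 4 / 432).
    { assert (Hg4 : 4 / tau ^ 2 <= g) by (replace (4 / tau ^ 2) with (4 * / tau ^ 2) by (field; lra); lra).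
      assert (0 < 4 / tau ^ 2) by (apply Rdiv_lt_0_compat; [lra | apply pow_lt; lra]).
      assert (Hgg2 : 4 / tau ^ 2 * (4 / tau ^ 2) <= g * g) by (apply Rmult_le_compat; lra).
      replace (1 / (27 * g * g)) with (/ (27 * (g * g))) by (field; lra).
      replace (tau ^ 4 / 432) with (/ (27 * (4 / tau ^ 2 * (4 / tau ^ 2)))) by (field; lra).
      apply Rinv_le_contravar. apply Rmult_lt_0_compat; [lra|]. apply Rmult_lt_0_compat; lra. lra. }
    assert (Hpos1 : 0 <= (1 - e / 2) ^ k) by (apply pow_le; lra).
    assert (Hpos2 : 0 <= / ((tau / 4000) ^ 5)) by (left; apply Rinv_0_lt_compat, pow_lt; lra).
    apply Rle_trans with (/ ((tau / 4000) ^ 5) * (tau ^ 4 / 432)).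
    { apply Rmult_le_compat; try lra. apply Rle_mult_inv_pos; nra. }
    replace (/ ((tau / 4000) ^ 5) * (tau ^ 4 / 432)) with (4000 ^ 5 / (432 * tau)) by (field; lra).
    apply Rmult_le_reg_r with (432 * tau * 43200). nra.
    replace (4000 ^ 5 / (432 * tau) * (432 * tau * 43200)) with (4000 ^ 5 * 43200) by (field; lra).
    replace (tau ^ 2 / 43200 * (432 * tau * 43200)) with (432 * tau ^ 3) by (field; lra).
    assert (E : 4000 ^ 5 * 43200 = 44236800000000000000000) by ring.
    assert (E2 : 10 ^ 21 = 1000000000000000000000) by ring.
    lra. }
  assert (HdeltaB : 2 * ((1 + 2 * e) ^ T1 * ((1 - e) ^ (99 * T1) / e)) <= 1).
  { replace (99 * T1)%nat with (2 * T1 + 97 * T1)%nat by lia.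
    rewrite pow_add, pow_sqr.
    assert (Hb1 : (1 + 2 * e) ^ T1 * ((1 - e) * (1 - e)) ^ T1 <= 1).
    { rewrite <- Rpow_mult_distr. apply Rle_trans with (1 ^ T1); [| rewrite pow1; lra]. apply pow_incr.
      split. apply Rmult_le_pos; [lra | nra].
      assert (E : 1 - (1 + 2 * e) * ((1 - e) * (1 - e)) = e * e * (3 - 2 * e)) by ring.
      assert (0 <= e * e * (3 - 2 * e)) by (apply Rmult_le_pos; nra). lra. }
    assert (HT1p : (0 < 97 * T1)%nat) by lia.
    pose proof (decay e (97 * T1) ltac:(lra) HT1p) as Hd.
    rewrite mult_INR in Hd. replace (INR 97) with 97 in Hd by (simpl; lra).
    assert (HX : tau / 6 <= e * (97 * INR T1) / 5).
    { assert (Hek : / tau ^ 2 * (97 * (tau ^ 3 / 100)) <= e * (97 * INR T1)).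
      { apply Rmult_le_compat; try lra. left; apply Rinv_0_lt_compat, pow_lt; lra. }
      replace (/ tau ^ 2 * (97 * (tau ^ 3 / 100))) with (97 * tau / 100) in Hek by (field; lra). lra. }
    assert (HX5 : / ((e * (97 * INR T1) / 5) ^ 5) <= / ((tau / 6) ^ 5)).
    { apply Rinv_le_contravar. apply pow_lt; lra. apply pow_incr; lra. }
    assert (Hei : / e <= tau ^ 2).
    { replace (tau ^ 2) with (/ / tau ^ 2) by (field; lra). apply Rinv_le_contravar; auto.
      apply Rinv_0_lt_compat, pow_lt; lra. }
    set (P1 := (1 + 2 * e) ^ T1) in *. set (P2 := ((1 - e) * (1 - e)) ^ T1) in *.
    set (P3 := (1 - e) ^ (97 * T1)) in *.
    assert (0 <= P1) by (apply pow_le; lra). assert (0 <= P2) by (apply pow_le; nra).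
    assert (0 <= P3) by (apply pow_le; lra).
    assert (HP3 : P3 <= / ((tau / 6) ^ 5)) by lra.
    replace (P1 * (P2 * P3 / e)) with ((P1 * P2) * (P3 * / e)) by (field; lra).
    assert (HQ : P3 * / e <= / ((tau / 6) ^ 5) * tau ^ 2).
    { apply Rmult_le_compat; auto. left; apply Rinv_0_lt_compat; lra. }
    assert (0 <= P3 * / e) by (apply Rmult_le_pos; [auto | left; apply Rinv_0_lt_compat; lra]).
    assert (P1 * P2 * (P3 * / e) <= P3 * / e).
    { replace (P3 * / e) with (1 * (P3 * / e)) at 2 by ring. apply Rmult_le_compat_r; auto. }
    replace (/ ((tau / 6) ^ 5) * tau ^ 2) with (7776 / tau ^ 3) in HQ by (field; lra).
    assert (7776 / tau ^ 3 <= 1 / 2).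
    { apply Rmult_le_reg_r with (tau ^ 3). auto.
      replace (7776 / tau ^ 3 * tau ^ 3) with 7776 by (field; lra).
      assert (E2 : 10 ^ 21 = 1000000000000000000000) by ring. lra. }
    lra. }
  assert (Hexpl : 0 <= g * INR (99 * T1) / 2 - g * INR T1 / 2 - e * INR T1).
  { rewrite mult_INR. replace (INR 99) with 99 by (simpl; lra).
    assert (0 <= INR T1) by apply pos_INR.
    assert (0 <= (g - e) * INR T1) by (apply Rmult_le_pos; lra). nra. }
  assert (Htau2 : 43200 <= tau ^ 2).
  { assert (10 ^ 7 * 10 ^ 7 <= tau * tau) by (apply Rmult_le_compat; lra).
    replace (tau ^ 2) with (tau * tau) by ring.
    assert (E : 10 ^ 7 * 10 ^ 7 = 100000000000000) by ring. lra. }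
  lra.
Qed.
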